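(* Let $\varepsilon_1,\varepsilon_2>0$ and $\varepsilon=\varepsilon_1+\varepsilon_2$. For a dataset $D=\{(x_i,y_i)\}_{i=1}^n$ with $x_i,y_i\in[0,1]$, let $S_{x^2}=\sum_i x_i^2$, $S_{x-x^2}=\sum_i (x_i-x_i^2)$, $S_{1-x}=\sum_i(1-x_i)$, $S_{xy}=\sum_i x_iy_i$, $S_{(1-x)y}=\sum_i (1-x_i)y_i$, $S_{1-y}=\sum_i(1-y_i)$. Let $Z_{11},Z_{12},Z_{13}$ be i.i.d. $\mathrm{Lap}(1/\varepsilon_1)$, let $Z_{21},Z_{22},Z_{23}$ be i.i.d. $\mathrm{Lap}(1/\varepsilon_2)$, with the two groups independent of each other. Then the mechanism releasing $\mathcal{M}(D)=\bigl(S_{x^2}+Z_{11},\,S_{x-x^2}+Z_{12},\,S_{1-x}+Z_{13},\,S_{xy}+Z_{21},\,S_{(1-x)y}+Z_{22},\,S_{1-y}+Z_{23}\bigr)$ satisfies $\varepsilon$-differential privacy.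
   Context: $\mathrm{Lap}(b)$ denotes the zero-mean Laplace distribution with density $\frac{1}{2b}e^{-|z|/b}$. Two datasets are neighboring ($D\sim D'$) if one is obtained from the other by adding or removing a single record in $[0,1]^2$. A randomized mechanism $\mathcal{M}$ satisfies $\varepsilon$-differential privacy (pure DP) if for all neighboring $D\sim D'$ and all measurable sets $S$ of outputs, $\Pr[\mathcal{M}(D)\in S]\le e^{\varepsilon}\Pr[\mathcal{M}(D')\in S]$. *)

(* Defs.v *)
From HB Require Import structures.
From mathcomp Require Import all_boot all_order all_algebra.
From mathcomp Require Import all_classical all_reals all_analysis.
Set Implicit Arguments. Unset Strict Implicit. Unset Printing Implicit Defensive.
Import Order.TTheory GRing.Theory Num.Theory.
Local Open Scope classical_set_scope.
Local Open Scope ring_scope.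

Section DP.
Variable R : realType.

Definition lap_pdf (b : R) (z : R) : R := (2 * b)^-1 * expR (- `|z| / b).

Definition in_unit_square (p : R * R) : Prop :=
  0 <= p.1 <= 1 /\ 0 <= p.2 <= 1.
Definition valid_dataset (D : seq (R * R)) : Prop :=
  forall p, p \in D -> in_unit_square p.

Definition neighboring (D D' : seq (R * R)) : Prop :=
  exists (r : R * R) (D1 D2 : seq (R * R)),
    in_unit_square r /\
    ((D = D1 ++ D2 /\ D' = D1 ++ r :: D2) \/
     (D' = D1 ++ D2 /\ D = D1 ++ r :: D2)).

Definition S_x2 (D : seq (R * R)) : R := \sum_(p <- D) p.1 ^+ 2.
Definition S_x_x2 (D : seq (R * R)) : R := \sum_(p <- D) (p.1 - p.1 ^+ 2).
Definition S_1_x (D : seq (R * R)) : R := \sum_(p <- D) (1 - p.1).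
Definition S_xy (D : seq (R * R)) : R := \sum_(p <- D) (p.1 * p.2).
Definition S_1_x_y (D : seq (R * R)) : R := \sum_(p <- D) ((1 - p.1) * p.2).
Definition S_1_y (D : seq (R * R)) : R := \sum_(p <- D) (1 - p.2).

(* output space R^6, as nested pairs, with its product (= Borel) sigma-algebra *)
Definition out6 := (R * R * R * R * R * R)%type.

(* Pr[M(D) \in S], where M(D) = stats(D) + (Z11,Z12,Z13,Z21,Z22,Z23) with the
   Z1j ~ Lap(1/eps1), Z2j ~ Lap(1/eps2) all independent: the joint law of the
   noise has the product density, integrated (iteratively, Tonelli) against
   Lebesgue measure. *)
Definition mech_prob (eps1 eps2 : R) (D : seq (R * R)) (S : set out6) : \bar R :=
  (\int[lebesgue_measure]_z11 \int[lebesgue_measure]_z12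
   \int[lebesgue_measure]_z13 \int[lebesgue_measure]_z21
   \int[lebesgue_measure]_z22 \int[lebesgue_measure]_z23
     ((\1_S (S_x2 D + z11, S_x_x2 D + z12, S_1_x D + z13,
              S_xy D + z21, S_1_x_y D + z22, S_1_y D + z23) : R)
      * lap_pdf eps1^-1 z11 * lap_pdf eps1^-1 z12 * lap_pdf eps1^-1 z13
      * lap_pdf eps2^-1 z21 * lap_pdf eps2^-1 z22 * lap_pdf eps2^-1 z23)%:E)%E.

End DP.

(* Main.v *)
Require Import Defs.
From HB Require Import structures.
From mathcomp Require Import all_boot all_order all_algebra.
From mathcomp Require Import all_classical all_reals all_analysis.
From mathcomp Require Import measurable_realfun.
From mathcomp Require Import ring lra.
Set Implicit Arguments. Unset Strict Implicit. Unset Printing Implicit Defensive.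
Import Order.TTheory GRing.Theory Num.Theory.
Import numFieldNormedType.Exports.
Local Open Scope classical_set_scope.
Local Open Scope ring_scope.

Section shift.
Variable R : realType.
Local Notation mu := (@lebesgue_measure R).

Lemma lebesgue_measure_shift (a : R) (A : set R) : measurable A ->
  mu ((fun x : R => x + a) @^-1` A) = mu A.
Proof.
move=> mA.
pose f : measurableTypeR R -> measurableTypeR R := fun x => x + a.
have mf : measurable_fun [set: measurableTypeR R] f by exact: measurable_funD.
pose m : {measure set (measurableTypeR R) -> \bar R} := pushforward mu f.
suff H : forall X, ocitv X -> mu X = m mf X.
  by rewrite (lebesgue_measure_unique H mA).
move=> _ [[x y] _ <-]; rewrite /m /f /=.
transitivity (mu ((fun x : R => x + a) @^-1` `]x, y]%classic)); last by [].
have -> : (fun x0 : R => x0 + a) @^-1` `]x, y]%classic = `](x - a), (y - a)]%classic.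
  apply/seteqP; split => z /=; rewrite !in_itv /=.
    by rewrite ltrBlDr lerBrDr.
  by rewrite ltrBlDr lerBrDr.
rewrite !lebesgue_measure_itv /= !lte_fin ltrD2r.
case: ifP => // _; rewrite -EFinD; congr (_%:E); ring.
Qed.

Import HBNNSimple.
Local Open Scope ereal_scope.

Section shf.
Variables (h : {nnsfun (measurableTypeR R) >-> R}) (a : R).
Definition shf : measurableTypeR R -> R := fun x => h (x + a)%R.

Let shf_mfun : measurable_fun [set: measurableTypeR R] shf.
Proof.
apply: (measurableT_comp (f := h) (g := fun x : measurableTypeR R => (x + a)%R : measurableTypeR R)) => //.
exact: measurable_funD.
Qed.
HB.instance Definition _ := isMeasurableFun.Build _ _ _ _ shf shf_mfun.

Let shf_fim : finite_set (range shf).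
Proof.
apply: (sub_finite_set _ (fimfunP h)) => _ [x _ <-]; by exists (x + a)%R.
Qed.
HB.instance Definition _ := FiniteImage.Build _ _ shf shf_fim.

Let shf_ge0 x : (0 <= shf x)%R.
Proof. exact: fun_ge0. Qed.
HB.instance Definition _ := isNonNegFun.Build _ _ shf shf_ge0.

Definition shf_nnsfun : {nnsfun (measurableTypeR R) >-> R} := shf.

Lemma sintegral_shf : sintegral mu shf_nnsfun = sintegral mu h.
Proof.
rewrite /sintegral; apply: eq_fsbigr => r _; congr (_ * _).
have -> : shf_nnsfun @^-1` [set r] = (fun x : R => x + a)%R @^-1` (h @^-1` [set r]) by [].
apply: lebesgue_measure_shift.
exact: (measurable_funPTI h (measurable_set1 r)).
Qed.
End shf.

Lemma ge0_integral_shift_le (f : R -> \bar R) (a : R) : (forall x, 0 <= f x) ->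
  \int[mu]_x f (x + a)%R <= \int[mu]_x f x.
Proof.
move=> f0; rewrite !ge0_integralTE //.
apply: ge_ereal_sup => _ [h /= hle <-]; apply: ereal_sup_ubound => /=.
exists (shf_nnsfun h (- a)); last exact: sintegral_shf.
move=> x /=; rewrite /shf; have := hle (x - a)%R; by rewrite subrK.
Qed.

Lemma ge0_integral_shift (f : R -> \bar R) (a : R) : (forall x, 0 <= f x) ->
  \int[mu]_x f (x + a)%R = \int[mu]_x f x.
Proof.
move=> f0; apply/eqP; rewrite eq_le ge0_integral_shift_le //=.
have := @ge0_integral_shift_le (fun x => f (x + a)%R) (- a) (fun x => f0 _).
by under eq_integral do rewrite subrK.
Qed.


Lemma ge0_le_integral_scale (f g : R -> \bar R) (c : R) : (0 < c)%R ->
  (forall x, 0 <= f x) -> (forall x, 0 <= g x) -> (forall x, f x <= c%:E * g x) ->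
  \int[mu]_x f x <= c%:E * \int[mu]_x g x.
Proof.
move=> c0 f0 g0 fg.
rewrite !ge0_integralTE //.
apply: ge_ereal_sup => _ [h /= hle <-].
have ci0 : (0 <= c^-1)%R by rewrite invr_ge0 ltW.
pose h' := scale_nnsfun h ci0.
have -> : sintegral mu h = c%:E * sintegral mu h'.
  rewrite /h' /scale_nnsfun /= sintegralrM muleA -EFinM divff ?gt_eqF // mul1e.
  done.
rewrite lee_pmul2l ?lte_fin //.

apply: ereal_sup_ubound => /=; exists h' => // x /=.
have H := le_trans (hle x) (fg x).
rewrite EFinM; apply: le_trans (lee_wpmul2l _ H) _; first by rewrite lee_fin.
by rewrite muleA -EFinM mulVf ?gt_eqF // mul1e.
Qed.
End shift.

Local Close Scope ereal_scope.
Local Open Scope ring_scope.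

Section lap.
Variable R : realType.

Lemma lap_ge0 (e z : R) : 0 < e -> 0 <= lap_pdf e^-1 z.
Proof.
move=> e0; rewrite /lap_pdf mulr_ge0 ?expR_ge0 // invr_ge0 mulr_ge0 // invr_ge0 ltW //.
Qed.

Lemma lap_shift_le (e u s s' : R) : 0 < e ->
  lap_pdf e^-1 (u - s) <= expR (e * `|s - s'|) * lap_pdf e^-1 (u - s').
Proof.
move=> e0; rewrite /lap_pdf mulrCA ler_pM2l; last first.
  by rewrite invr_gt0 mulr_gt0 // invr_gt0.
rewrite -expRD ler_expR !invrK !mulNr.
have := ler_distD s (u - s') (u - s).
have -> : u - s' - (u - s) = s - s' by ring.
have -> : u - s' - s = u - s' - s by [].
move=> H.
have H2 : `|u - s'| <= `|u - s| + `|s - s'|.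
  have := ler_distD s u s'. by [].
have : `|u - s'| * e <= (`|u - s| + `|s - s'|) * e by rewrite ler_pM2r.
nra.
Qed.

Lemma prod6_le (I a1 a2 a3 a4 a5 a6 b1 b2 b3 b4 b5 b6 k1 k2 k3 k4 k5 k6 : R) :
  0 <= I -> 0 <= a1 -> 0 <= a2 -> 0 <= a3 -> 0 <= a4 -> 0 <= a5 -> 0 <= a6 ->
  a1 <= k1 * b1 -> a2 <= k2 * b2 -> a3 <= k3 * b3 ->
  a4 <= k4 * b4 -> a5 <= k5 * b5 -> a6 <= k6 * b6 ->
  I * a1 * a2 * a3 * a4 * a5 * a6 <=
  (k1 * k2 * k3 * k4 * k5 * k6) * (I * b1 * b2 * b3 * b4 * b5 * b6).
Proof.
move=> I0 h1 h2 h3 h4 h5 h6 l1 l2 l3 l4 l5 l6.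
have -> : k1 * k2 * k3 * k4 * k5 * k6 * (I * b1 * b2 * b3 * b4 * b5 * b6) =
  I * (k1 * b1) * (k2 * b2) * (k3 * b3) * (k4 * b4) * (k5 * b5) * (k6 * b6) by ring.
by rewrite !ler_pM ?mulr_ge0.
Qed.

Lemma pointwise_le (e1 e2 I : R) (s s' u : R * R * R * R * R * R) :
  0 < e1 -> 0 < e2 -> 0 <= I ->
  e1 * (`|s.1.1.1.1.1 - s'.1.1.1.1.1| + `|s.1.1.1.1.2 - s'.1.1.1.1.2| + `|s.1.1.1.2 - s'.1.1.1.2|)
  + e2 * (`|s.1.1.2 - s'.1.1.2| + `|s.1.2 - s'.1.2| + `|s.2 - s'.2|) <= e1 + e2 ->
  I * lap_pdf e1^-1 (u.1.1.1.1.1 - s.1.1.1.1.1) * lap_pdf e1^-1 (u.1.1.1.1.2 - s.1.1.1.1.2)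
    * lap_pdf e1^-1 (u.1.1.1.2 - s.1.1.1.2) * lap_pdf e2^-1 (u.1.1.2 - s.1.1.2)
    * lap_pdf e2^-1 (u.1.2 - s.1.2) * lap_pdf e2^-1 (u.2 - s.2)
  <= expR (e1 + e2) *
  (I * lap_pdf e1^-1 (u.1.1.1.1.1 - s'.1.1.1.1.1) * lap_pdf e1^-1 (u.1.1.1.1.2 - s'.1.1.1.1.2)
    * lap_pdf e1^-1 (u.1.1.1.2 - s'.1.1.1.2) * lap_pdf e2^-1 (u.1.1.2 - s'.1.1.2)
    * lap_pdf e2^-1 (u.1.2 - s'.1.2) * lap_pdf e2^-1 (u.2 - s'.2)).
Proof.
move: s s' u => [[[[[s1 s2] s3] s4] s5] s6] [[[[[t1 t2] t3] t4] t5] t6]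
  [[[[[u1 u2] u3] u4] u5] u6] /= e10 e20 I0 hs.
apply: le_trans.
  apply: (prod6_le I0 (lap_ge0 _ e10) (lap_ge0 _ e10) (lap_ge0 _ e10)
    (lap_ge0 _ e20) (lap_ge0 _ e20) (lap_ge0 _ e20)
    (lap_shift_le u1 s1 t1 e10) (lap_shift_le u2 s2 t2 e10) (lap_shift_le u3 s3 t3 e10)
    (lap_shift_le u4 s4 t4 e20) (lap_shift_le u5 s5 t5 e20) (lap_shift_le u6 s6 t6 e20)).
apply: ler_wpM2r.
  by do 6!(apply: mulr_ge0; last exact: lap_ge0).

rewrite -!expRD ler_expR; rewrite !mulrDr in hs; lra.
Qed.

Local Notation mu := (@lebesgue_measure R).

Definition J (e1 e2 : R) (S : set (out6 R)) (s : R * R * R * R * R * R) : \bar R :=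
  (\int[mu]_u1 \int[mu]_u2 \int[mu]_u3 \int[mu]_u4 \int[mu]_u5 \int[mu]_u6
    ((\1_S (u1, u2, u3, u4, u5, u6) : R)
      * lap_pdf e1^-1 (u1 - s.1.1.1.1.1) * lap_pdf e1^-1 (u2 - s.1.1.1.1.2)
      * lap_pdf e1^-1 (u3 - s.1.1.1.2) * lap_pdf e2^-1 (u4 - s.1.1.2)
      * lap_pdf e2^-1 (u5 - s.1.2) * lap_pdf e2^-1 (u6 - s.2))%:E)%E.

Lemma indic_ge0' (S : set (out6 R)) x : 0 <= (\1_S x : R).
Proof. by rewrite indicE. Qed.

Ltac ige0 e10 e20 := repeat (apply: integral_ge0 => ? _); rewrite lee_fin;
  do 6!(apply: mulr_ge0; last (apply: lap_ge0; [exact: e10 || exact: e20]));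
  exact: indic_ge0'.

Lemma J_le (e1 e2 : R) S (s s' : R * R * R * R * R * R) :
  0 < e1 -> 0 < e2 ->
  e1 * (`|s.1.1.1.1.1 - s'.1.1.1.1.1| + `|s.1.1.1.1.2 - s'.1.1.1.1.2| + `|s.1.1.1.2 - s'.1.1.1.2|)
  + e2 * (`|s.1.1.2 - s'.1.1.2| + `|s.1.2 - s'.1.2| + `|s.2 - s'.2|) <= e1 + e2 ->
  (J e1 e2 S s <= (expR (e1 + e2))%:E * J e1 e2 S s')%E.
Proof.
move=> e10 e20 hs; rewrite /J.
do 6!(apply: ge0_le_integral_scale; [exact: expR_gt0| by move=> ?; ige0 e10 e20 | by move=> ?; ige0 e10 e20 |
  move=> ?]).
rewrite -EFinM lee_fin.
match goal with |- context[\1_S (?a, ?b, ?c, ?d, ?e, ?f)] =>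
  exact: (@pointwise_le e1 e2 _ s s' (a, b, c, d, e, f) e10 e20 (indic_ge0' _ _) hs) end.
Qed.

Lemma mech_J (e1 e2 : R) (D : seq (R * R)) S : 0 < e1 -> 0 < e2 ->
  mech_prob e1 e2 D S =
  J e1 e2 S (S_x2 D, S_x_x2 D, S_1_x D, S_xy D, S_1_x_y D, S_1_y D).
Proof.
move=> e10 e20; rewrite /mech_prob /J /=.
apply: eq_trans (esym (ge0_integral_shift (- S_x2 D) _)) _; first by move=> ?; ige0 e10 e20.
apply: eq_integral => u1 _.
apply: eq_trans (esym (ge0_integral_shift (- S_x_x2 D) _)) _; first by move=> ?; ige0 e10 e20.
apply: eq_integral => u2 _.
apply: eq_trans (esym (ge0_integral_shift (- S_1_x D) _)) _; first by move=> ?; ige0 e10 e20.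
apply: eq_integral => u3 _.
apply: eq_trans (esym (ge0_integral_shift (- S_xy D) _)) _; first by move=> ?; ige0 e10 e20.
apply: eq_integral => u4 _.
apply: eq_trans (esym (ge0_integral_shift (- S_1_x_y D) _)) _; first by move=> ?; ige0 e10 e20.
apply: eq_integral => u5 _.
apply: eq_trans (esym (ge0_integral_shift (- S_1_y D) _)) _; first by move=> ?; ige0 e10 e20.
apply: eq_integral => u6 _.
by rewrite !subrKC.
Qed.
End lap.

Section stats.
Variable R : realType.


Lemma big_ins (F : R * R -> R) (D1 D2 : seq (R * R)) (r : R * R) :
  \sum_(p <- D1 ++ r :: D2) F p = F r + \sum_(p <- D1 ++ D2) F p.
Proof. by rewrite !big_cat big_cons /= addrCA. Qed.

Lemma dist_ins (a c : R) : `|a - (c + a)| = `|c| /\ `|(c + a) - a| = `|c|.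
Proof. by split; [rewrite distrC|]; rewrite addrK. Qed.

Lemma neigh_bound (e1 e2 : R) (D1 D2 : seq (R * R)) (r : R * R) : 0 < e1 -> 0 < e2 -> in_unit_square r ->
  let s := (S_x2 (D1 ++ D2), S_x_x2 (D1 ++ D2), S_1_x (D1 ++ D2),
            S_xy (D1 ++ D2), S_1_x_y (D1 ++ D2), S_1_y (D1 ++ D2)) in
  let s' := (S_x2 (D1 ++ r :: D2), S_x_x2 (D1 ++ r :: D2), S_1_x (D1 ++ r :: D2),
            S_xy (D1 ++ r :: D2), S_1_x_y (D1 ++ r :: D2), S_1_y (D1 ++ r :: D2)) in
  (e1 * (`|s.1.1.1.1.1 - s'.1.1.1.1.1| + `|s.1.1.1.1.2 - s'.1.1.1.1.2| + `|s.1.1.1.2 - s'.1.1.1.2|)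
  + e2 * (`|s.1.1.2 - s'.1.1.2| + `|s.1.2 - s'.1.2| + `|s.2 - s'.2|) <= e1 + e2) /\
  (e1 * (`|s'.1.1.1.1.1 - s.1.1.1.1.1| + `|s'.1.1.1.1.2 - s.1.1.1.1.2| + `|s'.1.1.1.2 - s.1.1.1.2|)
  + e2 * (`|s'.1.1.2 - s.1.1.2| + `|s'.1.2 - s.1.2| + `|s'.2 - s.2|) <= e1 + e2).
Proof.
move: r => [x y] e10 e20 [/= /andP[x0 x1] /andP[y0 y1]] /=.
rewrite /S_x2 /S_x_x2 /S_1_x /S_xy /S_1_x_y /S_1_y !big_ins /=.
rewrite !(proj1 (dist_ins _ _)) !(proj2 (dist_ins _ _)).
have h1 : 0 <= x ^+ 2 by rewrite sqr_ge0.
have h2 : 0 <= x - x ^+ 2 by rewrite subr_ge0 expr2 ler_piMr.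
have h3 : 0 <= 1 - x by rewrite subr_ge0.
have h4 : 0 <= x * y by rewrite mulr_ge0.
have h5 : 0 <= (1 - x) * y by rewrite mulr_ge0.
have h6 : 0 <= 1 - y by rewrite subr_ge0.
rewrite !ger0_norm //.
have -> : x ^+ 2 + (x - x ^+ 2) + (1 - x) = 1 by ring.
have -> : x * y + (1 - x) * y + (1 - y) = 1 by ring.
by rewrite !mulr1 lexx.
Qed.
End stats.

Unset Implicit Arguments.

Theorem mainTheorem5 (R : realType) (eps1 eps2 : R) :
  0 < eps1 -> 0 < eps2 ->
  forall D D' : seq (R * R),
    valid_dataset D -> valid_dataset D' -> neighboring D D' ->
    forall S : set (out6 R), measurable S ->
      (mech_prob eps1 eps2 D S <= (expR (eps1 + eps2))%:E * mech_prob eps1 eps2 D' S)%E.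
Proof.
move=> e10 e20 D D' _ _ [r [D1 [D2 [hr hD]]]] S _.
have [H1 H2] := neigh_bound D1 D2 e10 e20 hr.
rewrite !mech_J //.
by case: hD => [[-> ->]|[-> ->]]; apply: J_le.
Qed.
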